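(* Let $\mu>0$ and $\Sigma=\{0,1,\dots,\mu\}$. The language $\mathcal{L}_{LA}=\{A\in\Sigma^\omega : \text{the limit-average of } A \text{ exists}\}$ is neither $\omega$-regular nor $\omega$-context-free.
   Context: For a sequence $M$, $\mathrm{Sum}(M[0,n-1])=\sum_{j=0}^{n-1}M[j]$. The limit-average of $M$ exists iff $\liminf_{n\to\infty}\frac1n\mathrm{Sum}(M[0,n-1])=\limsup_{n\to\infty}\frac1n\mathrm{Sum}(M[0,n-1])$, and then $\mathrm{LA}(M)$ is this common value. An $\omega$-context-free language is one accepted by a B\''uchi pushdown automaton. *)

(* Defs.v *)
From HB Require Import structures.
From mathcomp Require Import all_boot.
From Stdlib Require Import Reals.

Set Implicit Arguments.
Unset Strict Implicit.
Unset Printing Implicit Defensive.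

Definition oword (Sigma : Type) := nat -> Sigma.
Definition olang (Sigma : Type) := oword Sigma -> Prop.

Definition is_limsup (u : nat -> R) (l : R) : Prop :=
  forall eps : R, (0 < eps)%R ->
    (exists N, forall n, (N <= n)%coq_nat -> (u n < l + eps)%R) /\
    (forall N, exists n, (N <= n)%coq_nat /\ (l - eps < u n)%R).

Definition is_liminf (u : nat -> R) (l : R) : Prop :=
  forall eps : R, (0 < eps)%R ->
    (exists N, forall n, (N <= n)%coq_nat -> (l - eps < u n)%R) /\
    (forall N, exists n, (N <= n)%coq_nat /\ (u n < l + eps)%R).

Definition Sum (mu : nat) (M : oword 'I_mu.+1) (n : nat) : nat :=
  \sum_(j < n) (M j : nat).

(* (1/n) Sum(M[0,n-1]), indexed from n = 1 (the value at index k is for n = k+1) *)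
Definition avg (mu : nat) (M : oword 'I_mu.+1) (k : nat) : R :=
  (INR (Sum M k.+1) / INR k.+1)%R.

(* the limit-average exists: liminf = limsup (both finite, the averages lie in [0,mu]) *)
Definition LA_exists (mu : nat) (M : oword 'I_mu.+1) : Prop :=
  exists l : R, is_liminf (avg M) l /\ is_limsup (avg M) l.

Definition L_LA (mu : nat) : olang 'I_mu.+1 := fun A => LA_exists A.
Arguments L_LA mu A : clear implicits.

Record buchi (Sigma : finType) := Buchi {
  bu_Q : finType;
  bu_init : pred bu_Q;
  bu_delta : bu_Q -> Sigma -> bu_Q -> bool;
  bu_acc : pred bu_Q
}.

Definition buchi_accepts (Sigma : finType) (A : buchi Sigma) (w : oword Sigma) : Prop :=
  exists r : nat -> bu_Q A,
    @bu_init _ A (r 0) /\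
    (forall i, @bu_delta _ A (r i) (w i) (r i.+1)) /\
    (forall N, exists i, N <= i /\ @bu_acc _ A (r i)).

Definition omega_regular (Sigma : finType) (L : olang Sigma) : Prop :=
  exists A : buchi Sigma, forall w, L w <-> buchi_accepts A w.

(* A transition from state q, reading a letter (Some a) or nothing (None),
   with top-of-stack Z, goes to a state q' and replaces Z by the word gamma. *)
Record bpda (Sigma : finType) := BPDA {
  pd_Q : finType;
  pd_G : finType;
  pd_q0 : pd_Q;
  pd_z0 : pd_G;
  pd_delta : pd_Q -> option Sigma -> pd_G -> seq (pd_Q * seq pd_G);
  pd_acc : pred pd_Q
}.

(* An accepting run on w: an infinite sequence of configurations (st i, stk i),
   starting in (q0, [:: z0]), each step labelled by lab i (a letter or epsilon);
   pos i counts the letters read before step i; letters read agree with w,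
   the whole word is read, and accepting states are visited infinitely often. *)
Definition bpda_accepts (Sigma : finType) (P : bpda Sigma) (w : oword Sigma) : Prop :=
  exists (st : nat -> pd_Q P) (stk : nat -> seq (pd_G P))
         (lab : nat -> option Sigma) (pos : nat -> nat),
    st 0 = @pd_q0 _ P /\ stk 0 = [:: @pd_z0 _ P] /\ pos 0 = 0 /\
    (forall i, exists (Z : pd_G P) (rest gam : seq (pd_G P)),
        stk i = Z :: rest /\
        (st i.+1, gam) \in @pd_delta _ P (st i) (lab i) Z /\
        stk i.+1 = gam ++ rest) /\
    (forall i, match lab i with
               | Some a => a = w (pos i) /\ pos i.+1 = (pos i).+1
               | None => pos i.+1 = pos i
               end) /\
    (forall n, exists i, n <= pos i) /\
    (forall N, exists i, N <= i /\ @pd_acc _ P (st i)).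

Definition omega_context_free (Sigma : finType) (L : olang Sigma) : Prop :=
  exists P : bpda Sigma, forall w, L w <-> bpda_accepts P w.

(* Main.v *)
Require Import Defs.
From HB Require Import structures.
From mathcomp Require Import all_boot.
From Stdlib Require Import Reals.
From Stdlib Require Import Lia Lra Psatz Classical IndefiniteDescription.
From mathcomp Require Import zify.

Set Implicit Arguments. Unset Strict Implicit. Unset Printing Implicit Defensive.

Fixpoint sta (ln : nat -> nat) (m : nat) : nat :=
  match m with 0 => 0 | m'.+1 => sta ln m' + ln m' end.

Fixpoint loc (ln : nat -> nat) (fuel t m : nat) : nat * nat :=
  match fuel with
  | 0 => (m, t - sta ln m)
  | f.+1 => if t < sta ln m.+1 then (m, t - sta ln m) else loc ln f t m.+1
  end.

Definition dec ln t := loc ln t.+1 t 0.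

Definition gsplice {T} (pre : nat -> T) (F : nat -> nat -> T) (c : nat)
  (ln : nat -> nat) (t : nat) : T :=
  if t < c then pre t else let: (m, off) := dec ln (t - c) in F m off.

Section Splice.
Variable ln : nat -> nat.
Hypothesis hl : forall m, 0 < ln m.

Lemma sta_ge m : m <= sta ln m.
Proof. elim: m => //= m IH; have := hl m; lia. Qed.

Lemma sta_mono m m' : m <= m' -> sta ln m <= sta ln m'.
Proof.
elim: m' => [|m' IH]; first by rewrite leqn0 => /eqP ->.
rewrite leq_eqVlt => /orP [/eqP -> //|]; rewrite ltnS => /IH /=; lia.
Qed.

Lemma loc_spec f m0 m t : m0 <= m -> m - m0 < f ->
  sta ln m <= t < sta ln m.+1 -> loc ln f t m0 = (m, t - sta ln m).
Proof.
elim: f m0 => [|f IH] m0 //= h1 h2 /andP [h3 h4].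
case: ifP => h5.
  have -> : m0 = m; last by [].
  apply/eqP; rewrite eqn_leq h1 /=; rewrite leqNgt; apply/negP => hlt.
  have := sta_mono hlt; simpl in *; lia.
have hlt : m0 < m.
  rewrite ltn_neqAle h1 andbT; apply/negP => /eqP E; subst m0; by rewrite h4 in h5.
apply: IH; [done|lia|by rewrite h3 h4].
Qed.

Lemma dec_spec m t : sta ln m <= t < sta ln m.+1 -> dec ln t = (m, t - sta ln m).
Proof.
move=> h; apply: loc_spec => //; have := sta_ge m; move: h => /andP[h _]; lia.
Qed.

Lemma decomp t : exists m, sta ln m <= t < sta ln m.+1.
Proof.
have ex : exists m, t < sta ln m.+1 by exists t; have := sta_ge t.+1; lia.
case: (ex_minnP ex) => m hm hmin; exists m; rewrite hm andbT.
case: m hm hmin => [|k] hm hmin //.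
rewrite leqNgt; apply/negP => /hmin; lia.
Qed.

Lemma gsplice_pre T pre F c t : t < c -> @gsplice T pre F c ln t = pre t.
Proof. by rewrite /gsplice => ->. Qed.

Lemma gsplice_seg T pre F c m off : off < ln m ->
  @gsplice T pre F c ln (c + sta ln m + off) = F m off.
Proof.
move=> h; rewrite /gsplice ifF; last lia.
rewrite (@dec_spec m); last by rewrite /=; lia.
by have -> : c + sta ln m + off - c - sta ln m = off by lia.
Qed.

Lemma tcases c t : t < c \/ exists m off, off < ln m /\ t = c + sta ln m + off.
Proof.
case: (ltnP t c) => h; [by left|right].
have [m /andP [h1 h2]] := decomp (t - c).
exists m, (t - c - sta ln m); simpl in h2; split; lia.
Qed.

Lemma stepcases c t : t.+1 < c \/ t.+1 = c \/
  (exists m off, off.+1 < ln m /\ t = c + sta ln m + off) \/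
  (exists m off, off.+1 = ln m /\ t = c + sta ln m + off).
Proof.
case: (tcases c t) => [h|[m [off [h1 h2]]]].
  case: (ltnP t.+1 c) => h'; [by left|right; left; lia].
right; right; case: (ltnP off.+1 (ln m)) => h3.
  by left; exists m, off.
by right; exists m, off; split => //; lia.
Qed.

End Splice.

Section W0.
Variable mu : nat.

Lemma Sum_add (M : oword 'I_mu.+1) n d :
  Sum M (n + d) = Sum M n + \sum_(j < d) (M (n + j) : nat).
Proof. by rewrite /Sum big_split_ord /=. Qed.

Lemma Sum_S (M : oword 'I_mu.+1) n : Sum M n.+1 = Sum M n + M n.
Proof. by rewrite /Sum big_ord_recr. Qed.

Lemma Sum_le (M : oword 'I_mu.+1) n : Sum M n <= mu * n.
Proof.
elim: n => [|n IH]; first by rewrite /Sum big_ord0.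
rewrite Sum_S; have := ltn_ord (M n); lia.
Qed.

Definition w0 : oword 'I_mu.+1 :=
  fun n => if Nat.sqrt n.+1 == Nat.sqrt n then ord_max else ord0.

Lemma Sum_w0 N : Sum w0 N + mu * Nat.sqrt N = mu * N.
Proof.
elim: N => [|N IH]; first by rewrite /Sum big_ord0.
rewrite Sum_S; case: (Nat.sqrt_succ_or N) => E; rewrite E.
  have -> : (w0 N : nat) = 0 by rewrite /w0 E ifF //; apply/negP => /eqP; lia.
  rewrite !mulnS; lia.
have -> : (w0 N : nat) = mu by rewrite /w0 E eqxx.
rewrite mulnS; lia.
Qed.

Lemma sqrt_bound D N : D * D <= N -> D * Nat.sqrt N <= N.
Proof.
move=> h; have [h1 _] := Nat.sqrt_spec N (le_0_n N).
case: (leqP D (Nat.sqrt N)) => h2.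
  have := leq_mul h2 (leqnn (Nat.sqrt N)); move/leP: h1; lia.
have := leq_mul (leqnn D) (ltnW h2); lia.
Qed.

End W0.

Section Reals.
Local Open Scope R_scope.

Lemma lt_div a x y : 0 < y -> a * y < x -> a < x / y.
Proof. move=> hy h; apply (Rmult_lt_reg_r y) => //; field_simplify; lra. Qed.
Lemma div_lt b x y : 0 < y -> x < b * y -> x / y < b.
Proof. move=> hy h; apply (Rmult_lt_reg_r y) => //; field_simplify; lra. Qed.
Lemma lt_div_inv a x y : 0 < y -> a < x / y -> a * y < x.
Proof.
move=> hy h; have := Rmult_lt_compat_r y _ _ hy h.
have -> : x / y * y = x by field; lra. done.
Qed.
Lemma div_lt_inv b x y : 0 < y -> x / y < b -> x < b * y.
Proof.
move=> hy h; have := Rmult_lt_compat_r y _ _ hy h.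
have -> : x / y * y = x by field; lra. done.
Qed.
End Reals.

Lemma INR_S_pos n : (0 < INR n.+1)%R.
Proof. apply: lt_0_INR; lia. Qed.

Lemma LA_of_conv mu (M : oword 'I_mu.+1) l :
  (forall eps, (0 < eps)%R -> exists N, forall n, N <= n ->
     (l - eps < avg M n)%R /\ (avg M n < l + eps)%R) -> LA_exists M.
Proof.
move=> H; exists l; split => eps he; have [N HN] := H eps he; split.
- by exists N => n /leP /HN [].
- move=> N'; exists (N + N'); split; first lia.
  by have [] := HN (N + N') (leq_addr _ _).
- by exists N => n /leP /HN [].
- move=> N'; exists (N + N'); split; first lia.
  by have [] := HN (N + N') (leq_addr _ _).
Qed.

Lemma conv_of_LA mu (M : oword 'I_mu.+1) : LA_exists M ->
  exists l, forall eps, (0 < eps)%R -> exists N, forall n, N <= n ->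
     (l - eps < avg M n)%R /\ (avg M n < l + eps)%R.
Proof.
move=> [l [hi hs]]; exists l => eps he.
have [[N1 H1] _] := hi eps he; have [[N2 H2] _] := hs eps he.
exists (N1 + N2) => n hn; split; [apply: H1|apply: H2]; apply/leP; lia.
Qed.

Lemma w0_LA mu : L_LA mu (w0 mu).
Proof.
apply: (@LA_of_conv mu _ (INR mu)) => eps he.
have [D HD] := INR_archimed eps (INR mu) he.
exists (D * D) => n hn.
have hS := Sum_w0 mu n.+1.
have hB := @sqrt_bound D n.+1 (leqW hn).
have hle := Sum_le (w0 mu) n.+1.
rewrite /avg; set S := Sum _ _ in hS hle *; set s := Nat.sqrt n.+1 in hS hB *.
have hpos := INR_S_pos n.
have eS : INR S = (INR mu * INR n.+1 - INR mu * INR s)%R.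
  rewrite -!mult_INR -(minus_INR); last by apply/leP; lia.
  f_equal; lia.
have hB' : (INR D * INR s <= INR n.+1)%R by rewrite -mult_INR; apply: le_INR; apply/leP.
have hs0 := pos_INR s; have hm0 := pos_INR mu; have hD0 := pos_INR D.
split.
  apply: lt_div => //; rewrite eS.
  case: (Req_dec (INR s) 0) => hs.
    rewrite hs; nra.
  have hs1 : (0 < INR s)%R by lra.
  nra.
apply: div_lt => //.
have : (INR S <= INR mu * INR n.+1)%R by rewrite -mult_INR; apply: le_INR; apply/leP.
nra.
Qed.

Lemma notLA mu (M : oword 'I_mu.+1) (x : nat) : 0 < mu ->
  (forall N, exists n1 n2, N < n1 /\ N < n2 /\
     (1 + x) * Sum M n1 <= mu * x * n1 /\
     mu * (2 * x + 1) * n2 <= 2 * (1 + x) * Sum M n2) -> ~ LA_exists M.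
Proof.
move=> hmu H /conv_of_LA [l Hl].
have hX := pos_INR x; have hm : (0 < INR mu)%R by apply: lt_0_INR; apply/ltP.
set eps := (INR mu / (4 * (1 + INR x)))%R.
have he : (0 < eps)%R by rewrite /eps; apply: Rdiv_lt_0_compat; lra.
have eE : (eps * (4 * (1 + INR x)) = INR mu)%R by rewrite /eps; field; lra.
have [N HN] := Hl eps he.
have [n1 [n2 [h1 [h2 [h3 h4]]]]] := H N.
case: n1 h1 h3 => [//|k1] h1 h3; case: n2 h2 h4 => [//|k2] h2 h4.
have [A1 _] := HN k1 h1; have [_ A2] := HN k2 h2.
move: A1 A2; rewrite /avg => A1 A2.
have B1 := lt_div_inv (INR_S_pos k1) A1.
have B2 := div_lt_inv (INR_S_pos k2) A2.
have C3 : ((1 + INR x) * INR (Sum M k1.+1) <= INR mu * INR x * INR k1.+1)%R.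
  have -> : (1 + INR x = INR (1 + x))%R by rewrite plus_INR /=; lra.
  rewrite -!mult_INR; apply: le_INR; apply/leP; move: h3; lia.
have C4 : (INR mu * (2 * INR x + 1) * INR k2.+1 <= 2 * (1 + INR x) * INR (Sum M k2.+1))%R.
  have -> : (2 * INR x + 1 = INR (2 * x + 1))%R by rewrite plus_INR mult_INR /=; lra.
  have -> : (2 * (1 + INR x) = INR (2 * (1 + x)))%R by rewrite mult_INR plus_INR /=; lra.
  rewrite -!mult_INR; apply: le_INR; apply/leP; move: h4; lia.
have p1 := INR_S_pos k1; have p2 := INR_S_pos k2.
have D1 : ((l - eps) * (1 + INR x) < INR mu * INR x)%R.
  apply (Rmult_lt_reg_r (INR k1.+1)) => //.
  have := Rmult_lt_compat_l (1 + INR x) _ _ ltac:(lra) B1. nra.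
have D2 : (INR mu * (2 * INR x + 1) < 2 * (1 + INR x) * (l + eps))%R.
  apply (Rmult_lt_reg_r (INR k2.+1)) => //.
  have := Rmult_lt_compat_l (2 * (1 + INR x)) _ _ ltac:(lra) B2. nra.
nra.
Qed.

Definition pumpable mu (L : olang 'I_mu.+1) :=
  forall w, L w -> exists p : nat -> nat, (forall k, p k < p k.+1) /\
    forall a b : nat -> nat, (forall m, a m < b m) ->
      L (gsplice w (fun m off => w (p (a m) + off)) (p 0)
                 (fun m => p (b m) - p (a m))).

Lemma mono_lt (p : nat -> nat) : (forall k, p k < p k.+1) ->
  forall i j, i < j -> p i < p j.
Proof.
move=> hp i j; elim: j => [//|j IH]; rewrite ltnS leq_eqVlt => /orP [/eqP -> //|].
move=> /IH h; have := hp j; lia.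
Qed.

Lemma mono_le (p : nat -> nat) : (forall k, p k < p k.+1) ->
  forall i j, i <= j -> p i <= p j.
Proof.
move=> hp i j; rewrite leq_eqVlt => /orP [/eqP -> //|] /(mono_lt hp); lia.
Qed.

Lemma mono_ge (p : nat -> nat) : (forall k, p k < p k.+1) -> forall k, k <= p k.
Proof. move=> hp; elim => // k IH; have := hp k; lia. Qed.

Section Anal.
Variable mu : nat.
Hypothesis hmu : 0 < mu.
Variable p : nat -> nat.
Hypothesis hp : forall k, p k < p k.+1.

Let c := p 0.
Let J := c.+1 * c.+1.
Variable x : nat.
Hypothesis hxdef : x = p J - c.
Variable D : nat.
Hypothesis hDdef : D = 2 * (1 + x).
Let Kf L := J + 2 * p J + 16 * D * D + 4 * D * L + 1.

Definition isT (s : nat * nat * nat) := (s.1.2 <= s.2) && (0 < s.2).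

Fixpoint gen m : nat * nat * nat :=
  match m with
  | 0 => (c, c, 0)
  | m'.+1 => let s := gen m' in
     if isT s then (s.1.1 + (p (Kf s.1.1) - p J), s.1.1 + (p (Kf s.1.1) - p J), 0)
     else (s.1.1 + x, s.1.2, s.2.+1)
  end.

Let a m := if isT (gen m) then J else 0.
Let b m := if isT (gen m) then Kf (gen m).1.1 else J.
Let pl m := p (b m) - p (a m).
Let z := gsplice (w0 mu) (fun m off => w0 mu (p (a m) + off)) c pl.

Lemma hab m : a m < b m.
Proof. rewrite /a /b; case: ifP => _; rewrite /Kf /J; lia. Qed.

Lemma pl_pos m : 0 < pl m.
Proof. have := mono_lt hp (hab m); rewrite /pl; lia. Qed.

Lemma Lsta m : c + sta pl m = (gen m).1.1.
Proof.
elim: m => [|m IH] /=; first by rewrite addn0.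
rewrite addnA IH {1}/pl /a /b; case: ifP => h //=; by rewrite hxdef.
Qed.

Lemma x_pos : 0 < x.
Proof. have := mono_lt hp (_ : 0 < J); rewrite hxdef /c /J; lia. Qed.

Lemma deficit : Sum (w0 mu) (p J) + mu <= Sum (w0 mu) c + mu * x.
Proof.
have h1 := Sum_w0 mu (p J); have h2 := Sum_w0 mu c.
have hJ : J <= p J by apply: mono_ge.
have hs : Nat.sqrt c < Nat.sqrt (p J).
  have := Nat.sqrt_le_lin c; move/leP => hc.
  have : c.+1 <= Nat.sqrt (p J) by apply/leP; apply Nat.sqrt_le_square; apply/leP; exact: hJ.
  lia.
have hm := leq_mul (leqnn mu) hs.
have hcJ : c <= p J by rewrite /c; apply: mono_le.
rewrite hxdef mulnBr; rewrite mulnS in hm; lia.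
Qed.

Lemma Sum_step m : Sum z (gen m.+1).1.1 = Sum z (gen m).1.1 +
   (Sum (w0 mu) (p (b m)) - Sum (w0 mu) (p (a m))).
Proof.
rewrite -!Lsta /= addnA Sum_add; congr (_ + _).
have -> : \sum_(j < pl m) (z (c + sta pl m + j) : nat) =
          \sum_(j < pl m) (w0 mu (p (a m) + j) : nat).
  by apply: eq_bigr => j _; rewrite /z gsplice_seg //; apply: pl_pos.
have -> : p (b m) = p (a m) + pl m by have := mono_lt hp (hab m); rewrite /pl; lia.
by rewrite Sum_add addKn.
Qed.


Lemma inv m : Sum z (gen m).1.1 + mu * (gen m).2 <= mu * (gen m).1.1 /\ (gen m).1.1 = (gen m).1.2 + (gen m).2 * x.
Proof.
elim: m => [|m [IH1 IH2]].
  by rewrite /= muln0 addn0 mul0n addn0; split => //; apply: Sum_le.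
have := Sum_step m; rewrite /a /b /=; case: ifP => h E.
  by rewrite muln0 addn0 mul0n addn0; split => //; apply: Sum_le.
rewrite E /=; split; last by rewrite mulSn; move: hxdef IH2; rewrite /c; lia.
have := deficit; rewrite /c => hd.
have hx := leq_mul (leqnn mu) x_pos; rewrite muln1 in hx.
rewrite mulnS mulnDr; move: hd IH1 hx; generalize (mu * x) (mu * (gen m).2) (mu * (gen m).1.1) (Sum z (gen m).1.1) (Sum (w0 mu) (p J)) (Sum (w0 mu) (p 0)); intros; lia.
Qed.

Lemma lowT m : isT (gen m) -> (1 + x) * Sum z (gen m).1.1 <= mu * x * (gen m).1.1.
Proof.
move: (inv m); rewrite /isT; case: (gen m) => [[L L0] n] /= [h1 h2] /andP [h3 h4].
have h5 : L <= n * (1 + x) by rewrite h2; lia.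
have h6 := leq_mul (leqnn mu) h5.
have h7 := leq_mul (leqnn (1 + x)) h1.
rewrite mulnDr (mulnC (1 + x) (mu * L)) in h7.
rewrite (mulnC mu (n * (1 + x))) in h6.
have : (1 + x) * (mu * n) = mu * (n * (1 + x)) by nia.
have : mu * L * (1 + x) = mu * L + mu * x * L by nia.
lia.
Qed.

Lemma highT m : isT (gen m) ->
  mu * (2 * x + 1) * (gen m.+1).1.1 <= 2 * (1 + x) * Sum z (gen m.+1).1.1.
Proof.
move=> hT; have := Sum_step m; rewrite /a /b /= hT /= => E; rewrite E.
set L := (gen m).1.1.
set K := Kf L.
have hK : K <= p K by apply: mono_ge.
have hJK : J < K by rewrite /K /Kf; lia.
have hpJK := mono_lt hp hJK.
have hSK := Sum_w0 mu (p K).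
have hSJ := Sum_le (w0 mu) (p J).
set sK := Nat.sqrt (p K) in hSK.
have hKb : 16 * D * D + 4 * D * L + 2 * p J + J < K by rewrite /K /Kf; lia.
have hb : (4 * D) * sK <= p K.
  apply: sqrt_bound; have : 4 * D * (4 * D) = 16 * D * D by nia.
  lia.
have hL : 4 * D * L <= p K by lia.
have h2J : 2 * p J <= p K by lia.
set t := p K - p J.
have ht : D * sK + D * L <= t.
  have : 4 * (D * sK + D * L) = 4 * D * sK + 4 * D * L by nia. rewrite /t; lia.
have hQ : (2 * x + 1) * (L + t) + D * sK <= D * t.
  have : D = (2 * x + 1) + 1 by rewrite hDdef; lia.
  move=> eD; move: ht; rewrite eD; nia.
have hQ' := leq_mul (leqnn mu) hQ.
have hd : mu * t <= Sum (w0 mu) (p K) - Sum (w0 mu) (p J) + mu * sK.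
  rewrite /t mulnBr; lia.
have hd' := leq_mul (leqnn D) hd.
rewrite hDdef in hd' hQ'.
have e1 : mu * ((2 * x + 1) * (L + t) + 2 * (1 + x) * sK) =
   mu * (2 * x + 1) * (L + t) + 2 * (1 + x) * (mu * sK) by nia.
have e2 : 2 * (1 + x) * (Sum (w0 mu) (p K) - Sum (w0 mu) (p J) + mu * sK) =
   2 * (1 + x) * (Sum (w0 mu) (p K) - Sum (w0 mu) (p J)) + 2 * (1 + x) * (mu * sK) by nia.
have e3 : mu * (2 * (1 + x) * t) = 2 * (1 + x) * (mu * t) by nia.
rewrite e1 in hQ'; rewrite e2 in hd'; rewrite e3 in hQ'.
have hz : 2 * (1 + x) * (Sum (w0 mu) (p K) - Sum (w0 mu) (p J)) <=
          2 * (1 + x) * (Sum z L + (Sum (w0 mu) (p K) - Sum (w0 mu) (p J))).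
  by apply: leq_mul => //; lia.
lia.
Qed.

Lemma infT m : exists m', m <= m' /\ isT (gen m').
Proof.
suff H : forall k m, (gen m).1.2 + 1 - (gen m).2 <= k -> exists m', m <= m' /\ isT (gen m').
  by apply: (H _ m (leqnn _)).
elim=> [|k IH] m0 hk; case hT: (isT (gen m0)); try by exists m0.
- move: hT hk; rewrite /isT; lia.
- have [m' [h1 h2]] : exists m', m0.+1 <= m' /\ isT (gen m').
    apply: IH; rewrite /= hT /=; lia.
  exists m'; split => //; lia.
Qed.

Lemma L_ge m : m <= (gen m).1.1.
Proof. rewrite -Lsta; have := sta_ge pl_pos m; lia. Qed.

Lemma key : exists a b : nat -> nat, (forall m, a m < b m) /\ ~ L_LA mu (gsplice (w0 mu) (fun m off => w0 mu (p (a m) + off)) (p 0)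
                 (fun m => p (b m) - p (a m))).
Proof.
exists a, b; split; first exact: hab.
apply: (@notLA mu z x hmu) => N.
have [m [h1 h2]] := infT N.+1.
exists (gen m).1.1, (gen m.+1).1.1; split; first by have := L_ge m; lia.
split; first by have := L_ge m.+1; lia.
by split; [apply: lowT|apply: highT].
Qed.

End Anal.

Lemma not_pumpable mu : 0 < mu -> ~ pumpable (L_LA mu).
Proof.
move=> hmu H; have [p [hp Hp]] := H _ (w0_LA mu).
have [a [b [hab Hn]]] := key hmu hp (erefl _) (erefl _).
exact: Hn (Hp a b hab).
Qed.


Lemma pigeon (K : finType) (key : nat -> K) (G : nat -> Prop) :
  (forall N, exists n, N <= n /\ G n) ->
  exists k, forall N, exists n, N <= n /\ G n /\ key n = k.
Proof.
move=> H; apply: NNPP => Hn.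
have H1 : forall k, exists N, forall n, N <= n -> G n -> key n <> k.
  move=> k; apply: NNPP => Hk; apply: Hn; exists k => N.
  apply: NNPP => HN; apply: Hk; exists N => n h1 h2 h3; apply: HN; by exists n.
pose Nf k := proj1_sig (constructive_indefinite_description _ (H1 k)).
have HNf : forall k n, Nf k <= n -> G n -> key n <> k.
  move=> k; exact: (proj2_sig (constructive_indefinite_description _ (H1 k))).
have [n [hn hG]] := H (\max_(k : K) Nf k).
apply: (HNf (key n) n) => //; apply: leq_trans hn; exact: (leq_bigmax_cond (key n)).
Qed.

Lemma mono_step (pos : nat -> nat) : (forall i, pos i <= pos i.+1) ->
  forall i j, i <= j -> pos i <= pos j.
Proof.
move=> hp i j; elim: j => [|j IH]; first by rewrite leqn0 => /eqP ->.
rewrite leq_eqVlt => /orP [/eqP -> //|]; rewrite ltnS => /IH h; have := hp j; lia.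
Qed.

Lemma select (K : finType) (key : nat -> K) (G Acc : nat -> Prop) (pos : nat -> nat) :
  (forall N, exists n, N <= n /\ G n) -> (forall N, exists n, N <= n /\ Acc n) ->
  (forall i, pos i <= pos i.+1) -> (forall n, exists i, n <= pos i) ->
  exists I : nat -> nat, (forall k, I k < I k.+1) /\ (forall k, G (I k)) /\
    (forall k, key (I k) = key (I 0)) /\
    (forall k, exists j, I k <= j < I k.+1 /\ Acc j) /\
    (forall k, pos (I k) < pos (I k.+1)).
Proof.
move=> hG hA hpos hunb.
have [kp Hk] := pigeon key hG.
have Hn : forall n, exists n', n < n' /\ G n' /\ key n' = kp /\
   (exists j, n <= j < n' /\ Acc j) /\ pos n < pos n'.
  move=> n; have [i hi] := hunb (pos n).+1.
  have [j [hj1 hj2]] := hA (n + i).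
  have [n' [h1 [h2 h3]]] := Hk j.+1.
  exists n'; split; first lia.
  split => //; split => //; split; first by exists j; split => //; lia.
  have := mono_step hpos (_ : i <= n'); lia.
pose nx n := proj1_sig (constructive_indefinite_description _ (Hn n)).
have Hnx : forall n, n < nx n /\ G (nx n) /\ key (nx n) = kp /\
   (exists j, n <= j < nx n /\ Acc j) /\ pos n < pos (nx n).
  move=> n; exact: (proj2_sig (constructive_indefinite_description _ (Hn n))).
have [n0 [_ [hn0 hk0]]] := Hk 0.
pose I := fix I k := match k with 0 => n0 | k'.+1 => nx (I k') end.
have hkI : forall k, key (I k) = kp.
  by case => [|k] //=; have [_ [_ []]] := Hnx (I k).
exists I; split; first by move=> k; have [] := Hnx (I k).
split; first by case => [|k] //=; have [_ []] := Hnx (I k).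
split; first by move=> k; rewrite !hkI.
split; first by move=> k; have [_ [_ [_ []]]] := Hnx (I k).
by move=> k; have [_ [_ [_ []]]] := Hnx (I k).
Qed.

Lemma buchi_pump (Sigma : finType) (A : buchi Sigma) (w : oword Sigma) :
  buchi_accepts A w -> exists p : nat -> nat, (forall k, p k < p k.+1) /\
    forall a b : nat -> nat, (forall m, a m < b m) ->
      buchi_accepts A (gsplice w (fun m off => w (p (a m) + off)) (p 0)
                 (fun m => p (b m) - p (a m))).
Proof.
move=> [r [h0 [hd hacc]]].
have [I [hI [_ [hkey [hacI _]]]]] := @select _ r (fun _ => True)
   (fun j => bu_acc (r j)) (fun i => i) (fun N => ex_intro _ N (conj (leqnn N) I))
   hacc (fun i => leqnSn i) (fun n => ex_intro _ n (leqnn n)).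
exists I; split => // a b hab.
set ln := fun m => I (b m) - I (a m).
have hl : forall m, 0 < ln m by move=> m; have := mono_lt hI (hab m); rewrite /ln; lia.
have hIb : forall m, I (a m) + ln m = I (b m).
  by move=> m; have := mono_lt hI (hab m); rewrite /ln; lia.
set c := I 0.
exists (gsplice r (fun m off => r (I (a m) + off)) c ln).
have seg0 : forall T pre F, @gsplice T pre F c ln c = F 0 0.
  by move=> T pre F; have := gsplice_seg hl pre F c (hl 0); rewrite /= !addn0.
split.
  case: (ltnP 0 c) => hc; first by rewrite gsplice_pre.
  have e : c = 0 by lia.
  by rewrite -{1}e seg0 addn0 hkey -/c e.
split.
  move=> t; case: (stepcases hl c t) => [h|[h|[[m [off [h1 h2]]]|[m [off [h1 h2]]]]]].
  - rewrite !gsplice_pre; try lia. exact: hd.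
  - rewrite (gsplice_pre _ _ _ (t:=t)); last lia. rewrite (gsplice_pre _ _ _ (t:=t)); last lia.
    rewrite h seg0 addn0 hkey -/c -h; exact: hd.
  - rewrite h2 -addnS (gsplice_seg hl _ _ _ (m:=m) (off:=off.+1) h1) (gsplice_seg hl _ _ _ (m:=m) (off:=off)); last lia.
    rewrite (gsplice_seg hl _ _ _ (ltnW h1)) addnS; exact: hd.
  - have h1' : off < ln m by lia.
    rewrite h2 (gsplice_seg hl _ _ _ h1') (gsplice_seg hl _ _ _ h1').
    have -> : (c + sta ln m + off).+1 = c + sta ln m.+1 + 0 by rewrite /= -h1; lia.
    rewrite (gsplice_seg hl) // addn0 hkey -(hkey (b m)) -(hIb m) -h1 addnS.
    exact: hd.
move=> N; have [j [/andP [hj1 hj2] hj]] := hacI (a N).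
have hj3 : j < I (b N) by have := mono_le hI (hab N); lia.
exists (c + sta ln N + (j - I (a N))); split.
  have := sta_ge hl N; lia.
rewrite (gsplice_seg hl); last by rewrite /ln; lia.
by have -> : I (a N) + (j - I (a N)) = j by lia.
Qed.

Lemma ex_min_prop (Q : nat -> Prop) : (exists n, Q n) ->
  exists n, Q n /\ forall m, Q m -> n <= m.
Proof.
move=> [n hn]; apply: NNPP => H.
suff : forall k m, m <= k -> ~ Q m by move/(_ n n (leqnn n)).
elim=> [|k IH] m hm hq; apply: H; exists m; split => // m' hq'.
  lia.
rewrite leqNgt; apply/negP => hlt; apply: (IH m') => //; lia.
Qed.

Lemma catIr (T : Type) (u v B : seq T) : u ++ B = v ++ B -> u = v.
Proof.
move=> e; have hs : size u = size v by have := congr1 size e; rewrite !size_cat; lia.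
by rewrite -(take_size_cat B (erefl (size u))) e take_size_cat.
Qed.

Definition strip (T : Type) (x B : seq T) := take (size x - size B) x.

Lemma strip_cat (T : Type) (s B : seq T) : strip (s ++ B) B = s.
Proof. by rewrite /strip size_cat addnK take_size_cat. Qed.

Section BP.
Variables (Sigma : finType) (P : bpda Sigma) (w : oword Sigma).
Variables (st : nat -> pd_Q P) (stk : nat -> seq (pd_G P))
          (lab : nat -> option Sigma) (pos : nat -> nat).
Hypothesis htr : forall i, exists (Z : pd_G P) (rest gam : seq (pd_G P)),
        stk i = Z :: rest /\
        (st i.+1, gam) \in @pd_delta _ P (st i) (lab i) Z /\
        stk i.+1 = gam ++ rest.
Hypothesis hlab : forall i, match lab i with
               | Some a => a = w (pos i) /\ pos i.+1 = (pos i).+1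
               | None => pos i.+1 = pos i
               end.

Lemma pos_step i : pos i <= pos i.+1.
Proof. by have := hlab i; case: (lab i) => [a [_ ->]|->]. Qed.

Definition base i := behead (stk i).
Definition lowpt i := forall t, i <= t -> exists s, s != [::] /\ stk t = s ++ base i.

Lemma stk_cons i : stk i = head (pd_z0 P) (stk i) :: base i.
Proof. by rewrite /base; have [Z [rest [gam [-> _]]]] := htr i. Qed.

Lemma low_inf N : exists i, N <= i /\ lowpt i.
Proof.
have [h [[i [hN hsz]] hmin]] := @ex_min_prop (fun h => exists t, N <= t /\ size (stk t) = h)
   (ex_intro _ (size (stk N)) (ex_intro _ N (conj (leqnn N) erefl))).
exists i; split => // t hit.
have -> : t = i + (t - i) by lia.
elim: (t - i) => [|d [s [hs E]]].
  exists [:: head (pd_z0 P) (stk i)]; rewrite addn0; split => //; exact: stk_cons.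
have [Z [rest [gam [e1 [_ e2]]]]] := htr (i + d).
move: hs E; case: s => [//|Z' s1] _ E.
rewrite E in e1; case: e1 => _ er.
exists (gam ++ s1); rewrite addnS e2 -er catA; split => //.
have hN' : N <= (i + d).+1 by lia.
have := hmin (size (stk (i + d).+1)) (ex_intro _ (i + d).+1 (conj hN' erefl)).
rewrite e2 -er catA size_cat -hsz {1}stk_cons /= => hh.
rewrite -size_eq0 -lt0n; by move: hh; rewrite -{1}(add0n (size (base i))) ltn_add2r.
Qed.

Lemma lift_step (q1 q2 : pd_Q P) (l : option Sigma) (s s' B R : seq (pd_G P)) :
  s != [::] ->
  (exists Z rest gam, s ++ B = Z :: rest /\
     (q2, gam) \in @pd_delta _ P q1 l Z /\ s' ++ B = gam ++ rest) ->
  exists Z rest gam, s ++ R = Z :: rest /\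
     (q2, gam) \in @pd_delta _ P q1 l Z /\ s' ++ R = gam ++ rest.
Proof.
case: s => [//|Z1 s1] _ [Z [rest [gam [e1 [e2 e3]]]]].
case: e1 => e0 er; subst Z1.
exists Z, (s1 ++ R), gam; split => //; split => //.
rewrite -er catA in e3; by rewrite (catIr e3) catA.
Qed.


Hypothesis h0 : st 0 = @pd_q0 _ P.
Hypothesis hs0 : stk 0 = [:: @pd_z0 _ P].
Hypothesis hp0 : pos 0 = 0.
Hypothesis hunb : forall n, exists i, n <= pos i.
Hypothesis hacc : forall N, exists i, N <= i /\ @pd_acc _ P (st i).

Lemma bp_main : exists p : nat -> nat, (forall k, p k < p k.+1) /\ forall a b : nat -> nat, (forall m, a m < b m) ->
      bpda_accepts P (gsplice w (fun m off => w (p (a m) + off)) (p 0)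
                 (fun m => p (b m) - p (a m))).
Proof.
have [I [hI [hlow [hkey [hacI hposI]]]]] :=
  @select _ (fun i => (st i, head (@pd_z0 _ P) (stk i))) lowpt
   (fun j => @pd_acc _ P (st j)) pos low_inf hacc pos_step hunb.
exists (fun k => pos (I k)); split => // a b hab /=.
have hst : forall k, st (I k) = st (I 0) by move=> k; exact: (f_equal fst (hkey k)).
set Z0 := head (@pd_z0 _ P) (stk (I 0)).
have stkI : forall k, stk (I k) = Z0 :: base (I k).
  move=> k; rewrite {1}stk_cons; congr (_ :: _); exact: (f_equal snd (hkey k)).
have pmono := mono_step pos_step.
set tl := fun m => I (b m) - I (a m).
set pl := fun m => pos (I (b m)) - pos (I (a m)).
have htl : forall m, 0 < tl m by move=> m; have := mono_lt hI (hab m); rewrite /tl; lia.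
have hpl : forall m, 0 < pl m by move=> m; have := mono_lt hposI (hab m); rewrite /pl; lia.
have hIb : forall m, I (a m) + tl m = I (b m).
  by move=> m; have := mono_lt hI (hab m); rewrite /tl; lia.
have hPb : forall m, pos (I (a m)) + pl m = pos (I (b m)).
  by move=> m; have := mono_lt hposI (hab m); rewrite /pl; lia.
set c := I 0.
set cp := pos (I 0).
set B := fun m => base (I (a m)).
pose R := fix R m := match m with 0 => base (I 0)
   | m'.+1 => behead (strip (stk (I (b m'))) (B m')) ++ R m' end.
set st' := gsplice st (fun m off => st (I (a m) + off)) c tl.
set stk' := gsplice stk (fun m off => strip (stk (I (a m) + off)) (B m) ++ R m) c tl.
set lab' := gsplice lab (fun m off => lab (I (a m) + off)) c tl.
set pos' := gsplice pos (fun m off => cp + sta pl m + (pos (I (a m) + off) - pos (I (a m)))) c tl.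
set z := gsplice w _ _ _.
have hseg : forall m off, off <= tl m -> exists s, s != [::] /\ stk (I (a m) + off) = s ++ B m.
  by move=> m off _; apply: (hlow (a m)); lia.
have cur : forall m off, off < tl m ->
   st' (c + sta tl m + off) = st (I (a m) + off) /\ stk' (c + sta tl m + off) = strip (stk (I (a m) + off)) (B m) ++ R m /\ lab' (c + sta tl m + off) = lab (I (a m) + off) /\ pos' (c + sta tl m + off) = cp + sta pl m + (pos (I (a m) + off) - pos (I (a m))).
  by move=> m off h; rewrite /st' /stk' /lab' /pos' !(gsplice_seg htl).
have at_c : st' c = st c /\ stk' c = stk c /\ pos' c = pos c.
  have [e1 [e2 [_ e4]]] := cur 0 0 (htl 0).
  rewrite /= !addn0 in e1 e2 e4.
  rewrite e1 e2 e4 subnn addn0 hst; split => //; split => //.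
  rewrite (stkI (a 0)) -/(B 0) (_ : Z0 :: B 0 = [:: Z0] ++ B 0) // strip_cat /=.
  exact: (esym (stkI 0)).
have pre1 : forall t, t < c -> st' t.+1 = st t.+1 /\ stk' t.+1 = stk t.+1 /\ pos' t.+1 = pos t.+1.
  move=> t ht; case: (ltnP t.+1 c) => h.
    by rewrite /st' /stk' /pos' !gsplice_pre.
  have -> : t.+1 = c by lia.
  exact: at_c.
have nxt : forall m off, off < tl m ->
   st' (c + sta tl m + off).+1 = st (I (a m) + off).+1 /\ stk' (c + sta tl m + off).+1 = strip (stk (I (a m) + off).+1) (B m) ++ R m /\ pos' (c + sta tl m + off).+1 = cp + sta pl m + (pos (I (a m) + off).+1 - pos (I (a m))).
  move=> m off h; case: (ltnP off.+1 (tl m)) => h2.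
    have [e1 [e2 [_ e4]]] := cur m off.+1 h2.
    by rewrite -addnS e1 e2 e4 -!addnS.
  have eo : off.+1 = tl m by lia.
  have E : (c + sta tl m + off).+1 = c + sta tl m.+1 + 0 by rewrite /= -eo; lia.
  have [e1 [e2 [_ e4]]] := cur m.+1 0 (htl _).
  have Eb : (I (a m) + off).+1 = I (b m) by rewrite -hIb -eo addnS.
  rewrite E e1 e2 e4 Eb !addn0 subnn addn0 hst -(hst (b m)); split => //.
  split; last by rewrite /= -addnA (_ : pl m = pos (I (b m)) - pos (I (a m))) //.
  have [s [hs Es]] := hseg m (tl m) (leqnn _).
  rewrite hIb in Es.
  rewrite (stkI (a m.+1)) -/(B m.+1) (_ : Z0 :: B m.+1 = [:: Z0] ++ B m.+1) // strip_cat /=.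
  rewrite Es strip_cat.
  move: Es hs; rewrite stkI; case: s => [//|Z1 s1] [<- _] _ //.
have step_in : forall m off, off < tl m ->
   exists Z rest gam, stk' (c + sta tl m + off) = Z :: rest /\ (st' (c + sta tl m + off).+1, gam) \in @pd_delta _ P (st' (c + sta tl m + off))
        (lab' (c + sta tl m + off)) Z /\ stk' (c + sta tl m + off).+1 = gam ++ rest.
  move=> m off h; have [e1 [e2 [e3 _]]] := cur m off h; have [f1 [f2 _]] := nxt m off h.
  rewrite e1 e2 e3 f1 f2.
  have [s [hs Es]] := hseg m off (ltnW h).
  have [s' [_ Es']] := hseg m off.+1 h.
  rewrite addnS in Es'.
  rewrite Es Es' !strip_cat.
  apply: (lift_step (B:=B m)) => //; rewrite -Es -Es'; exact: htr.
exists st', stk', lab', pos'.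
split.
  case: (ltnP 0 c) => hc; first by rewrite /st' gsplice_pre.
  have e : c = 0 by lia.
  by have [e1 [e2 e3]] := at_c; rewrite e in e1 e2 e3; rewrite e1.
split.
  case: (ltnP 0 c) => hc; first by rewrite /stk' gsplice_pre.
  have e : c = 0 by lia.
  by have [e1 [e2 e3]] := at_c; rewrite e in e1 e2 e3; rewrite e2.
split.
  case: (ltnP 0 c) => hc; first by rewrite /pos' gsplice_pre.
  have e : c = 0 by lia.
  by have [e1 [e2 e3]] := at_c; rewrite e in e1 e2 e3; rewrite e3.
split.
  move=> t; case: (tcases htl c t) => [h|[m [off [h1 ->]]]]; last exact: step_in.
  have [f1 [f2 _]] := pre1 t h.
  by rewrite f1 f2 /st' /stk' /lab' !gsplice_pre.
split.
  move=> t; case: (tcases htl c t) => [h|[m [off [h1 ->]]]].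
    have [_ [_ f3]] := pre1 t h.
    have hct : pos t.+1 <= cp by apply: pmono.
    rewrite f3 /lab' /pos' !gsplice_pre //.
    have := hlab t; case: (lab t) => [x [ex ep]|//]; split => //.
    rewrite /z gsplice_pre; first exact: ex.
    rewrite ep in hct; rewrite -/cp; lia.
  have [_ [_ [e3 e4]]] := cur m off h1; have [_ [_ f3]] := nxt m off h1.
  rewrite e3 e4 f3.
  have hge := pmono (I (a m)) (I (a m) + off) (leq_addr _ _).
  have hle := pmono (I (a m) + off).+1 (I (b m)) ltac:(rewrite -hIb; lia).
  have := hlab (I (a m) + off); case: (lab (I (a m) + off)) => [x [ex ep]|ep].
    split; last by rewrite ep; lia.
    rewrite /z (gsplice_seg hpl); last by rewrite -hPb in hle; lia.
    by rewrite ex; congr w; lia.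
  by rewrite ep.
split.
  move=> n; exists (c + sta tl n + 0); have [_ [_ [_ e4]]] := cur n 0 (htl n).
  rewrite e4; have := sta_ge hpl n; lia.
move=> N; have [j [/andP [hj1 hj2] hj]] := hacI (a N).
have hj3 : j < I (b N) by have := mono_le hI (hab N); lia.
exists (c + sta tl N + (j - I (a N))); split.
  have := sta_ge htl N; lia.
have [e1 _] := cur N (j - I (a N)) ltac:(rewrite /tl; lia).
by rewrite e1 (_ : I (a N) + (j - I (a N)) = j) //; lia.
Qed.

End BP.

Lemma bpda_pump (Sigma : finType) (P : bpda Sigma) (w : oword Sigma) :
  bpda_accepts P w -> exists p : nat -> nat, (forall k, p k < p k.+1) /\ forall a b : nat -> nat, (forall m, a m < b m) ->
      bpda_accepts P (gsplice w (fun m off => w (p (a m) + off)) (p 0)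
                 (fun m => p (b m) - p (a m))).
Proof.
move=> [st [stk [lab [pos [h0 [hs0 [hp0 [htr [hlab [hunb hacc]]]]]]]]]].
exact: (bp_main htr hlab h0 hs0 hp0 hunb hacc).
Qed.

Theorem theorem15 (mu : nat) (hmu : 0 < mu) :
  ~ omega_regular (L_LA mu) /\ ~ omega_context_free (L_LA mu).
Proof.
split.
  move=> [A HA]; apply: (not_pumpable hmu) => w /HA /buchi_pump [p [hp Hp]].
  by exists p; split => // a b hab; apply/HA; apply: Hp.
move=> [A HA]; apply: (not_pumpable hmu) => w /HA /bpda_pump [p [hp Hp]].
by exists p; split => // a b hab; apply/HA; apply: Hp.
Qed.
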